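(* Let $X=\{a_1,\dots,a_n\}$ be a finite topological space with furtherness matrix $\Psi(X)$. Then $X$ is $T_0$ if and only if all rows of $\Psi(X)$ are pairwise distinct, and $X$ is $T_0$ if and only if all columns of $\Psi(X)$ are pairwise distinct.
   Context: For a finite topological space $X$ and $x\in X$, $U_x$ denotes the minimal open set containing $x$. A nested sequence of open sets around $x$ is a finite sequence $U_0\subsetneq U_1\subsetneq\cdots\subsetneq U_m=X$ of open sets with $U_0=U_x$ such that for each $j$ there is no open set $V$ with $U_j\subsetneq V\subsetneq U_{j+1}$. The furtherness function $\Psi:X\times X\to\{0,1,\dots,|X|-1\}$ is defined by: $\Psi(x,y)$ is the smallest integer $k\ge 0$ such that there exists a nested sequence $(U_j)_{j\ge0}$ of open sets around $x$ with $y\in U_k$. The furtherness matrix $\Psi(X)$ is the $n\times n$ matrix with $(i,j)$ entry $\Psi(a_i,a_j)$. *)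

(* Defs.v *)
From HB Require Import structures.
From mathcomp Require Import all_boot all_order all_algebra.
Set Implicit Arguments. Unset Strict Implicit. Unset Printing Implicit Defensive.

Section FiniteTop.
Variable T : finType.

(* O is a topology on the finite set T (finite unions/intersections suffice). *)
Definition is_topology (O : {set {set T}}) : Prop :=
  [/\ set0 \in O, setT \in O,
      (forall U V, U \in O -> V \in O -> U :|: V \in O) &
      (forall U V, U \in O -> V \in O -> U :&: V \in O)].

Definition Umin (O : {set {set T}}) (x : T) : {set T} :=
  \bigcap_(U in O | x \in U) U.

(* A nested sequence of open sets around x : U_0 ⊊ U_1 ⊊ ... ⊊ U_m = X,
   U_0 = U_x, with no open set strictly between consecutive terms;
   represented as a finite function on 'I_(m+1). *)
Definition nested_seq (O : {set {set T}}) (x : T) (m : nat)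
    (U : {ffun 'I_m.+1 -> {set T}}) : bool :=
  [&& U ord0 == Umin O x, U ord_max == setT,
      [forall i : 'I_m.+1, U i \in O] &
      [forall i : 'I_m,
         (U (widen_ord (leqnSn m) i) \proper U (lift ord0 i)) &&
         [forall V in O, ~~ ((U (widen_ord (leqnSn m) i) \proper V)
                             && (V \proper U (lift ord0 i)))]]].

(* there is a nested sequence around x with y in U_k.  A strict chain of
   subsets of T has at most #|T|+1 members, so the bound m <= #|T| is vacuous. *)
Definition furth_at (O : {set {set T}}) (x y : T) (k : nat) : bool :=
  [exists m : 'I_#|T|.+1,
     [exists U : {ffun 'I_(nat_of_ord m).+1 -> {set T}},
        [&& nested_seq O x U, k <= m & y \in U (inord k)]]].

Definition Psi (O : {set {set T}}) (x y : T) : nat :=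
  find (furth_at O x y) (iota 0 #|T|.+1).

Definition furth_mx (O : {set {set T}}) : 'M[nat]_#|T| :=
  \matrix_(i, j) Psi O (enum_val i) (enum_val j).

Definition T0 (O : {set {set T}}) : Prop :=
  forall x y : T, x != y -> exists2 U, U \in O & (x \in U) != (y \in U).

End FiniteTop.

(* Main.v *)
Require Import Defs.
From mathcomp Require Import all_boot all_order all_algebra.
Set Implicit Arguments. Unset Strict Implicit. Unset Printing Implicit Defensive.

Lemma Umin_open (T : finType) (O : {set {set T}}) : is_topology O ->
  forall x, Umin O x \in O.
Proof.
case=> _ hT _ hI x; rewrite /Umin.
apply: (big_ind (fun S => S \in O)) => //.
by move=> i /andP[].
Qed.

Lemma Umin_mem (T : finType) (O : {set {set T}}) x : x \in Umin O x.
Proof. by apply/bigcapP => U /andP[]. Qed.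

Lemma Umin_sub (T : finType) (O : {set {set T}}) x U :
  U \in O -> x \in U -> Umin O x \subset U.
Proof. by move=> hU hx; apply: (@bigcap_inf _ _ U); rewrite hU hx. Qed.

Lemma chain_exists (T : finType) (O : {set {set T}}) : is_topology O ->
  forall n A, #|~: A| <= n -> A \in O ->
  exists m (f : nat -> {set T}), [/\ f 0 = A, f m = setT, m <= #|~: A|,
    (forall i, i <= m -> f i \in O) &
    (forall i, i < m -> f i \proper f i.+1 /\
        forall V, V \in O -> ~~ ((f i \proper V) && (V \proper f i.+1)))].
Proof.
move=> hO; have hT : setT \in O by case: hO.
elim=> [|n IH] A hc hA; (case: (boolP (A == setT)) => [/eqP ->|nT];
  first by exists 0, (fun _ => setT); split => // i; rewrite ltn0).
- exfalso; move: hc; rewrite leqn0 => /eqP /cards0_eq hC.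
  by move: nT; rewrite -[A]setCK hC setC0 eqxx.
- pose P := fun B : {set T} => (B \in O) && (A \proper B).
  have PT : P setT by rewrite /P hT properT.
  case: (@arg_minnP _ setT P (fun B => #|B|) PT) => B /andP[BO AB] Bmin.
  have lt : #|~: B| < #|~: A| by apply: proper_card; rewrite properC.
  have [m [f [f0 fm mle fO fS]]] := IH B (leq_trans (leq_trans lt hc) (leqnn _)) BO.
  have hcB : #|~: B| <= n by rewrite -ltnS (leq_trans lt hc).
  exists m.+1, (fun i => if i is j.+1 then f j else A); split => //.
  + exact: leq_ltn_trans mle lt.
  + by case=> [|i] // hi; apply: fO.
  + case=> [|i] hi; last by apply: fS.
    rewrite f0; split => // V hV; apply/negP => /andP[AV VB].
    have := Bmin V; rewrite /P hV AV => /(_ isT).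
    by rewrite leqNgt (proper_card VB).
Qed.

Lemma furth0 (T : finType) (O : {set {set T}}) : is_topology O ->
  forall x y, furth_at O x y 0 = (y \in Umin O x).
Proof.
move=> hO x y; apply/idP/idP.
- case/existsP => m /existsP [U /and3P [hN _ hy]].
  move: hN => /and4P [/eqP h0 _ _ _].
  have e : inord 0 = ord0 :> 'I_m.+1 by apply: val_inj; rewrite /= inordK.
  by rewrite e h0 in hy.
- move=> hy.
  have [m [f [f0 fm mle fO fS]]] :=
    chain_exists hO (leqnn #|~: Umin O x|) (Umin_open hO x).
  have hm : m < #|T|.+1 by rewrite ltnS (leq_trans mle) // max_card.
  apply/existsP; exists (Ordinal hm).
  apply/existsP; exists [ffun i : 'I_m.+1 => f i].
  apply/and3P; split => //; last by rewrite ffunE inordK // f0.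
  apply/and4P; split.
  + by rewrite ffunE /= f0.
  + by rewrite ffunE /= fm.
  + by apply/forallP => i; rewrite ffunE; apply: fO; rewrite -ltnS.
  + apply/forallP => i; rewrite !ffunE lift0 /=.
    have [h1 h2] := fS i (ltn_ord i).
    rewrite h1 /=; apply/forallP => V; apply/implyP => hV; exact: h2.
Qed.

Lemma Psi0 (T : finType) (O : {set {set T}}) : is_topology O ->
  forall x y, Psi O x y = 0 <-> y \in Umin O x.
Proof.
move=> hO x y; rewrite /Psi /= furth0 //.
by case: (y \in Umin O x).
Qed.

Lemma Psi_diag (T : finType) (O : {set {set T}}) : is_topology O ->
  forall x, Psi O x x = 0.
Proof. by move=> hO x; apply/(Psi0 hO); apply: Umin_mem. Qed.

Lemma indist (T : finType) (O : {set {set T}}) x y :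
  (forall U, U \in O -> (x \in U) = (y \in U)) ->
  (forall z, Psi O x z = Psi O y z) /\ (forall z, Psi O z x = Psi O z y).
Proof.
move=> H.
have hU : Umin O x = Umin O y.
  rewrite /Umin; apply: eq_bigl => U; case: (boolP (U \in O)) => //= hU.
  exact: H.
split => z; first by rewrite /Psi /furth_at /nested_seq hU.
rewrite /Psi; apply: eq_find => k.
rewrite /furth_at; apply: eq_existsb => m; apply: eq_existsb => U.
case hN: (nested_seq O z U) => //=; case: (k <= m) => //=.
apply: H; move: hN => /and4P[_ _ /forallP hall _]; exact: hall.
Qed.

Lemma T0_sep (T : finType) (O : {set {set T}}) : is_topology O -> T0 O ->
  forall x y, x != y -> Psi O x y != 0 \/ Psi O y x != 0.
Proof.
move=> hO hT0 x y xy; case: (hT0 x y xy) => U hU.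
case hx: (x \in U); case hy: (y \in U) => // _.
- left; apply/negP => /eqP /(Psi0 hO) hm.
  by move: (subsetP (Umin_sub hU hx) _ hm); rewrite hy.
- right; apply/negP => /eqP /(Psi0 hO) hm.
  by move: (subsetP (Umin_sub hU hy) _ hm); rewrite hx.
Qed.

Lemma notT0 (T : finType) (O : {set {set T}}) x y :
  ~~ [exists U in O, (x \in U) != (y \in U)] ->
  forall U, U \in O -> (x \in U) = (y \in U).
Proof. by move/exists_inPn => H U hU; apply/eqP; rewrite -[_ == _]negbK H. Qed.

Theorem mainTheorem14 (T : finType) (O : {set {set T}}) (hO : is_topology O) :
  (T0 O <-> (forall i j : 'I_#|T|, i != j -> row i (furth_mx O) != row j (furth_mx O)))
  /\
  (T0 O <-> (forall i j : 'I_#|T|, i != j -> col i (furth_mx O) != col j (furth_mx O))).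
Proof.
split; split.
- move=> hT0 i j ij.
  have xy : enum_val i != enum_val j by rewrite (inj_eq enum_val_inj).
  apply/negP => /eqP /matrixP E.
  case: (T0_sep hO hT0 xy) => h.
  + by have := E ord0 j; rewrite !mxE Psi_diag // => /eqP; rewrite (negbTE h).
  + by have := E ord0 i; rewrite !mxE Psi_diag // => /esym /eqP; rewrite (negbTE h).
- move=> H x y xy.
  case: (boolP [exists U in O, (x \in U) != (y \in U)]) =>
    [/exists_inP [U hU hne]|hno]; first by exists U.
  exfalso; have := H (enum_rank x) (enum_rank y).
  rewrite (inj_eq enum_rank_inj) xy => /(_ isT) /eqP; apply.
  apply/matrixP => a b; rewrite !mxE !enum_rankK.
  exact: (indist (notT0 hno)).1.
- move=> hT0 i j ij.
  have xy : enum_val i != enum_val j by rewrite (inj_eq enum_val_inj).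
  apply/negP => /eqP /matrixP E.
  case: (T0_sep hO hT0 xy) => h.
  + by have := E i ord0; rewrite !mxE Psi_diag // => /esym /eqP; rewrite (negbTE h).
  + by have := E j ord0; rewrite !mxE Psi_diag // => /eqP; rewrite (negbTE h).
- move=> H x y xy.
  case: (boolP [exists U in O, (x \in U) != (y \in U)]) =>
    [/exists_inP [U hU hne]|hno]; first by exists U.
  exfalso; have := H (enum_rank x) (enum_rank y).
  rewrite (inj_eq enum_rank_inj) xy => /(_ isT) /eqP; apply.
  apply/matrixP => a b; rewrite !mxE !enum_rankK.
  exact: (indist (notT0 hno)).2.
Qed.
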